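(* Let $l>0$. For each $d\ge1$ let $Z_1,Z_2\sim\mathcal{N}(0,1)$ and $Z_x\sim\mathcal{N}_d(0,I_d)$ be random variables on a common probability space, not necessarily independent. Then, uniformly over all $\alpha\in[0,\infty)$, $$\lim_{d\to\infty}\Big(\mathbb{E}\big[Z_2\,\{1\wedge\exp(-l\alpha Z_1-l^2\lVert Z_x\rVert^2/(2d))\}\big]-\mathbb{E}\big[Z_2\,\{1\wedge\exp(-l\alpha Z_1-l^2/2)\}\big]\Big)=0.$$ *)

(* Defs.v *)
From HB Require Import structures.
From mathcomp Require Import all_boot all_order all_algebra.
From mathcomp Require Import all_classical all_reals all_analysis.
Set Implicit Arguments. Unset Strict Implicit. Unset Printing Implicit Defensive.
Import Order.TTheory GRing.Theory Num.Theory.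
Local Open Scope classical_set_scope.
Local Open Scope ring_scope.

Definition std_normal_rv {dsp : measure_display} {T : measurableType dsp}
  {R : realType} (P : probability T R) (X : T -> R) : Prop :=
  measurable_fun setT X /\
  forall B : set R, measurable B -> P (X @^-1` B) = normal_prob 0 1 B.

(* X = (X_0,...,X_{n-1}) : T -> R^n has law N_n(0, I_n): its law agrees with
   the n-fold product of N(0,1) on all measurable rectangles (which determines
   the joint law). *)
Definition std_gauss_vector {dsp : measure_display} {T : measurableType dsp}
  {R : realType} (P : probability T R) (n : nat) (X : 'I_n -> T -> R) : Prop :=
  (forall i, measurable_fun setT (X i)) /\
  forall B : 'I_n -> set R, (forall i, measurable (B i)) ->
    P (\bigcap_(i in [set: 'I_n]) (X i @^-1` B i)) =
    (\prod_(i < n) fine (normal_prob 0 1 (B i)))%:E.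

Definition sqnorm {R : realType} (n : nat) (x : 'I_n -> R) : R :=
  \sum_(i < n) x i ^+ 2.

(* Main.v *)
Require Import Defs.
From HB Require Import structures.
From mathcomp Require Import all_boot all_order all_algebra.
From mathcomp Require Import all_classical all_reals all_analysis.
From mathcomp Require Import measurable_realfun.
From mathcomp Require Import ring lra.
Import Order.TTheory GRing.Theory Num.Theory.
Local Open Scope classical_set_scope.
Local Open Scope ring_scope.

Lemma alg1 (F : realFieldType) (t x : F) : t != 0 -> (1 - t^-2) / 2 * x ^+ 2 =
  - (x - 0) ^+ 2 / (t ^+ 2 *+ 2) - - (x - 0) ^+ 2 / (1 ^+ 2 *+ 2).
Proof. move=> t0. rewrite subr0 -!(mulr_natr (_ ^+ 2)). field. exact: t0. Qed.

Lemma close (F : realFieldType) (j c k : F) : 0 < k -> (forall h, 0 < h < 1 -> j <= c + k * h) -> j <= c.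
Proof.
move=> k0 H; case: (lerP j c) => // cj; exfalso.
pose h := Num.min (1/2) ((j - c) / (2 * k)).
have h0 : 0 < h by rewrite lt_min; apply/andP; split; [lra|apply: divr_gt0; lra].
have h1 : h < 1 by rewrite gt_min; apply/orP; left; lra.
have := H h (ltac:(by rewrite h0 h1)).
have : h <= (j - c) / (2 * k) by rewrite ge_min lexx orbT.
rewrite ler_pdivlMr; last lra.
move=> A B; have : k * h <= (j - c) / 2 by lra.
lra.
Qed.

Lemma alg2 (F : realFieldType) (c j h : F) : 0 < c -> 0 <= j -> 0 < h < 1 ->
  c + (1 - (1 + h)^-2) / 2 * j <= (1 + h) * c -> j <= c + 3 * c * h.
Proof.
move=> c0 j0 /andP[h0 h1].
have e : (1 - (1 + h)^-2) / 2 = (h * (2 + h)) / (2 * (1 + h) ^+ 2).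
  field; lra.
rewrite e => H.
have p : 0 < 2 * (1 + h) ^+ 2 by nra.
have H' : h * (2 + h) * j <= h * (2 * (1 + h) ^+ 2) * c.
  have : (h * (2 + h)) / (2 * (1 + h) ^+ 2) * j <= h * c by lra.
  rewrite mulrAC ler_pdivrMr //. nra.
have H'' : (2 + h) * j <= 2 * (1 + h) ^+ 2 * c.
  rewrite -(ler_pM2l h0); nra.
nra.
Qed.
Lemma alg3 (F : realFieldType) (c j h : F) : 0 < c -> 0 <= j -> 0 < h < 1 ->
  c <= (1 - h) * c + ((1 - h)^-2 - 1) / 2 * j -> c <= j + 3 * c * h.
Proof.
move=> c0 j0 /andP[h0 h1].
have e : ((1 - h)^-2 - 1) / 2 = (h * (2 - h)) / (2 * (1 - h) ^+ 2).
  field; lra.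
rewrite e => H.
have p : 0 < 2 * (1 - h) ^+ 2 by nra.
have H' : h * (2 * (1 - h) ^+ 2) * c <= h * (2 - h) * j.
  have : h * c <= (h * (2 - h)) / (2 * (1 - h) ^+ 2) * j by lra.
  rewrite mulrAC ler_pdivlMr //. nra.
have H'' : 2 * (1 - h) ^+ 2 * c <= (2 - h) * j.
  rewrite -(ler_pM2l h0); nra.
nra.
Qed.

Lemma alg4 (F : realFieldType) (a b y s : F) : a + (1 - s)/2 * y <= b -> a <= b + (s - 1)/2 * y.
Proof.
have -> : (1 - s) / 2 * y = - ((s - 1) / 2 * y) by ring.
set k := (s - 1) / 2 * y. lra.
Qed.

Lemma alg5 (F : realFieldType) (x e f : F) : 0 <= e -> x ^+ 2 / 8 <= f -> x ^+ 4 * e <= 64 * (e * f * f).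
Proof.
move=> e0 h.
have y0 : 0 <= x ^+ 2 / 8 by apply: divr_ge0; [exact: sqr_ge0|lra].
have -> : x ^+ 4 = 64 * ((x ^+ 2 / 8) * (x ^+ 2 / 8)) by field.
set y := x ^+ 2 / 8 in y0 h *.
have : y * y <= f * f by nra.
nra.
Qed.
Lemma alg6 (F : realFieldType) (x : F) :
  - (x - 0) ^+ 2 / (1 ^+ 2 *+ 2) + x ^+ 2 / 8 + x ^+ 2 / 8 = - (x - 0) ^+ 2 / (2 *+ 2).
Proof. rewrite subr0 -!(mulr_natr (_ ^+ 2)) -(mulr_natr 2). field. by []. Qed.

Section S.
Variable R : realType.
Notation lam := (@lebesgue_measure R).
Notation nu := (@normal_prob R 0 1).


Lemma expR_tang (a b : R) : expR b + (a - b) * expR b <= expR a.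
Proof.
have -> : expR a = expR b * expR (a - b) by rewrite -expRD addrC subrK.
have -> : expR b + (a - b) * expR b = expR b * (1 + (a - b)) by ring.
by rewrite ler_wpM2l ?expR_ge0 // expR_ge1Dx.
Qed.

Lemma mnf (s : R) : measurable_fun setT (fun x : R => (normal_fun 0 s x)%:E).
Proof. by apply/measurable_EFinP; exact: measurable_normal_fun. Qed.

Lemma mx2nf : measurable_fun setT (fun x : R => (x ^+ 2 * normal_fun 0 1 x)%:E).
Proof.
apply/measurable_EFinP; apply: measurable_funM; last exact: measurable_normal_fun.
exact: measurable_funX.
Qed.

Lemma int_nf (s : R) : 0 < s ->
  (\int[lam]_x (normal_fun 0 s x)%:E = (normal_peak s)^-1%:E)%E.
Proof.
move=> s0.
have := integral_normal_pdf 0 s.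
rewrite normal_pdfE ?gt_eqF //.
under eq_integral do rewrite EFinM.
rewrite ge0_integralZl //; last 3 first.
- exact: mnf.
- by move=> x _; rewrite lee_fin normal_fun_ge0.
- by rewrite lee_fin normal_peak_ge0.
have p0 : 0 < normal_peak s by rewrite normal_peak_gt0 ?gt_eqF.
set I := (\int[lam]_x _)%E.
have I0 : (0 <= I)%E by apply: integral_ge0 => x _; rewrite lee_fin normal_fun_ge0.
move: I0; case: I => [r||] //= r0.
  move/eqP; rewrite -EFinM eqe => /eqP h.
  by congr EFin; apply: (mulfI (x:=normal_peak s)); rewrite ?gt_eqF // h divff // gt_eqF.
by rewrite gt0_muley ?lte_fin.
Qed.

Lemma nf_tang (t x : R) : t != 0 ->
  normal_fun 0 1 x + ((1 - t^-2) / 2) * (x ^+ 2 * normal_fun 0 1 x) <= normal_fun 0 t x.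
Proof.
move=> t0; rewrite /normal_fun.
have e : (1 - t^-2) / 2 * x ^+ 2 =
  - (x - 0) ^+ 2 / (t ^+ 2 *+ 2) - - (x - 0) ^+ 2 / (1 ^+ 2 *+ 2).
  exact: alg1.
rewrite mulrA e.
exact: expR_tang.
Qed.
Lemma peak_inv (s : R) : 0 < s -> (normal_peak s)^-1 = s * (normal_peak 1)^-1.
Proof.
move=> s0; rewrite /normal_peak !invrK.
have -> : s ^+ 2 * pi *+ 2 = s ^+ 2 * (1 ^+ 2 * pi *+ 2) by rewrite expr1n mul1r mulrnAr.
by rewrite sqrtrM ?sqr_ge0 // sqrtr_sqr ger0_norm // ltW.
Qed.

Lemma intJ : (\int[lam]_x (x ^+ 2 * normal_fun 0 1 x)%:E = ((normal_peak 1)^-1)%:E)%E.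
Proof.
set J := (\int[lam]_x _)%E.
set c := (normal_peak 1)^-1.
have c0 : 0 < c by rewrite invr_gt0 normal_peak_gt0 ?oner_neq0.
have J0 : (0 <= J)%E.
  by apply: integral_ge0 => x _; rewrite lee_fin mulr_ge0 ?sqr_ge0 ?normal_fun_ge0.
have H1 t : 1 < t -> (c%:E + ((1 - t^-2)/2)%:E * J <= (t * c)%:E)%E.
  move=> t1.
  have k0 : 0 <= (1 - t^-2)/2.
    apply: divr_ge0 => //; rewrite subr_ge0 invf_le1 ?exprn_gt0 ?(lt_trans ltr01) //.
    by rewrite exprn_ege1 // ltW.
  have e1 : (t * c)%:E = (\int[lam]_x (normal_fun 0 t x)%:E)%E.
    rewrite int_nf; last exact: (lt_trans ltr01).
    by rewrite peak_inv; last exact: (lt_trans ltr01).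
  have e2 : c%:E = (\int[lam]_x (normal_fun 0 1 x)%:E)%E.
    by rewrite int_nf; last exact: ltr01.
  rewrite e1 e2.
  rewrite -ge0_integralZl //; last 2 first.
  - exact: mx2nf.
  - by move=> x _; rewrite lee_fin mulr_ge0 ?sqr_ge0 ?normal_fun_ge0.
  rewrite -ge0_integralD //; last 4 first.
  - by move=> x _; rewrite lee_fin normal_fun_ge0.
  - exact: mnf.
  - by move=> x _; rewrite -EFinM lee_fin mulr_ge0 // mulr_ge0 ?sqr_ge0 ?normal_fun_ge0.
  - by apply: emeasurable_funM => //; exact: mx2nf.
  apply: ge0_le_integral => //.
  - by move=> x _; rewrite -EFinM -EFinD lee_fin addr_ge0 // ?normal_fun_ge0 // mulr_ge0 // mulr_ge0 ?sqr_ge0 ?normal_fun_ge0.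
  - apply: emeasurable_funD; first exact: mnf.
    by apply: emeasurable_funM => //; exact: mx2nf.
  - exact: mnf.
  move=> x _; rewrite -EFinM -EFinD lee_fin; apply: nf_tang.
  by rewrite gt_eqF // (lt_trans ltr01).
have H2 t : 0 < t < 1 -> (c%:E <= (t * c)%:E + ((t^-2 - 1)/2)%:E * J)%E.
  move=> /andP[t0 t1].
  have k0 : 0 <= (t^-2 - 1)/2.
    apply: divr_ge0 => //; rewrite subr_ge0 invf_ge1 ?exprn_gt0 //.
    by rewrite exprn_ile1 // ltW.
  have e1 : (t * c)%:E = (\int[lam]_x (normal_fun 0 t x)%:E)%E.
    rewrite int_nf; last exact: t0.
    by rewrite peak_inv; last exact: t0.
  have e2 : c%:E = (\int[lam]_x (normal_fun 0 1 x)%:E)%E.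
    by rewrite int_nf; last exact: ltr01.
  rewrite e1 e2.
  rewrite -ge0_integralZl //; last 2 first.
  - exact: mx2nf.
  - by move=> x _; rewrite lee_fin mulr_ge0 ?sqr_ge0 ?normal_fun_ge0.
  rewrite -ge0_integralD //; last 4 first.
  - by move=> x _; rewrite lee_fin normal_fun_ge0.
  - exact: mnf.
  - by move=> x _; rewrite -EFinM lee_fin mulr_ge0 // mulr_ge0 ?sqr_ge0 ?normal_fun_ge0.
  - by apply: emeasurable_funM => //; exact: mx2nf.
  apply: ge0_le_integral => //.
  - by move=> x _; rewrite lee_fin ?normal_fun_ge0.
  - exact: mnf.
  - apply: emeasurable_funD; first exact: mnf.
    by apply: emeasurable_funM => //; exact: mx2nf.
  move=> x _; rewrite -EFinM -EFinD lee_fin.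
  by apply: alg4; apply: nf_tang; exact: lt0r_neq0.
have Jfin : J \is a fin_num.
  rewrite ge0_fin_numE // ltNge leye_eq; apply/negP => /eqP Joo.
  have two1 : (1:R) < 2 by rewrite ltr1n.
  have := H1 2 two1; rewrite Joo gt0_muley ?lte_fin; last first.
    rewrite divr_gt0 // subr_gt0 invf_lt1 ?exprn_gt0 //.
    by rewrite expr_gt1 //.
  by rewrite addey.
move: J0 H1 H2; rewrite -(fineK Jfin); set j := fine J => j0 H1 H2.
rewrite lee_fin in j0.
congr EFin; apply/le_anti/andP; split.
  apply: (@close _ _ _ (3 * c)); first by rewrite mulr_gt0.
  move=> h /andP[h0 h1]; apply: alg2 => //; first by rewrite h0 h1.
  by have := H1 (1 + h); rewrite -EFinM -EFinD lee_fin; apply; rewrite ltrDl.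
apply: (@close _ _ _ (3 * c)); first by rewrite mulr_gt0.
move=> h /andP[h0 h1]; apply: alg3 => //; first by rewrite h0 h1.
have := H2 (1 - h); rewrite -EFinM -EFinD lee_fin; apply.
by rewrite subr_gt0 h1 gtrBl h0.
Qed.
Local Open Scope ereal_scope.
Lemma int_normal (f : R -> \bar R) : measurable_fun setT f -> (forall x, 0 <= f x) ->
  \int[nu]_x f x = \int[lam]_x (f x * (normal_pdf 0 1 x)%:E).
Proof.
move=> mf f0.
have numu : nu `<< lam := normal_prob_dominates 0 1.
rewrite -(Radon_Nikodym_SigmaFinite.change_of_variables numu) //.
apply: ae_eq_integral => //.
- apply: emeasurable_funM => //.
  exact: measurable_int (Radon_Nikodym_SigmaFinite.f_integrable numu).
- apply: emeasurable_funM => //.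
  by apply/measurable_EFinP; exact: measurable_normal_pdf.
apply: ae_eqe_mul2l.
apply: integral_ae_eq => //.
- exact: Radon_Nikodym_SigmaFinite.f_integrable numu.
- by apply/measurable_EFinP; exact: measurable_normal_pdf.
move=> E _ mE.
by rewrite -Radon_Nikodym_SigmaFinite.f_integral.
Qed.

Local Close Scope ereal_scope.
Lemma M2 : (\int[nu]_x (x ^+ 2)%:E = 1)%E.
Proof.
rewrite int_normal; last 2 first.
- by apply/measurable_EFinP; exact: measurable_funX.
- by move=> x; rewrite lee_fin sqr_ge0.
rewrite normal_pdfE ?oner_neq0 //.
under eq_integral do rewrite -EFinM mulrCA EFinM.
rewrite ge0_integralZl //; last 3 first.
- exact: mx2nf.
- by move=> x _; rewrite lee_fin mulr_ge0 ?sqr_ge0 ?normal_fun_ge0.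
- by rewrite lee_fin normal_peak_ge0.
rewrite intJ -EFinM divff //.
by rewrite gt_eqF // normal_peak_gt0 // oner_neq0.
Qed.
Lemma x4_bound (x : R) : x ^+ 4 * normal_fun 0 1 x <= 64 * normal_fun 0 (Num.sqrt 2) x.
Proof.
rewrite /normal_fun sqr_sqrtr ?ler0n // -alg6 !expRD.
apply: alg5; first exact: expR_ge0.
apply: (le_trans _ (expR_ge1Dx (x ^+ 2 / 8))).
by rewrite -[leLHS]add0r lerD2r ler01.
Qed.

Lemma M4fin : (\int[nu]_x (x ^+ 4)%:E < +oo)%E.
Proof.
have m4 : measurable_fun setT (fun x : R => (x ^+ 4 * normal_fun 0 1 x)%:E).
  apply/measurable_EFinP; apply: measurable_funM; last exact: measurable_normal_fun.
  exact: measurable_funX.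
have s2 : 0 < Num.sqrt (2:R) by rewrite sqrtr_gt0 ltr0n.
rewrite int_normal; last 2 first.
- by apply/measurable_EFinP; exact: measurable_funX.
- by move=> x; rewrite lee_fin exprn_even_ge0.
rewrite normal_pdfE ?oner_neq0 //.
under eq_integral do rewrite -EFinM mulrCA EFinM.
rewrite ge0_integralZl //; last 2 first.
- by move=> x _; rewrite lee_fin mulr_ge0 ?exprn_even_ge0 ?normal_fun_ge0.
- by rewrite lee_fin normal_peak_ge0.
apply: (@le_lt_trans _ _ ((normal_peak 1)%:E * (64 * (normal_peak (Num.sqrt 2))^-1)%:E)%E); last first.
  by rewrite -EFinM ltry.
apply: lee_wpmul2l; first by rewrite lee_fin normal_peak_ge0.
rewrite EFinM -int_nf // -ge0_integralZl //.
all: try exact: mnf.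
all: try (by move=> x _; rewrite lee_fin normal_fun_ge0).
all: try (by rewrite lee_fin ler0n).
apply: ge0_le_integral => //.
- by move=> x _; rewrite lee_fin mulr_ge0 ?exprn_even_ge0 ?normal_fun_ge0.
- by apply: emeasurable_funM => //; exact: mnf.
by move=> x _; rewrite -EFinM lee_fin x4_bound.
Qed.
End S.

Section Transfer.
Context {R : realType} {dsp : measure_display} {T : measurableType dsp} (P : probability T R).
Notation nu := (@normal_prob R 0 1).
Local Open Scope ereal_scope.

Lemma transfer (X : T -> R) (hX : std_normal_rv P X) (f : R -> \bar R) :
  measurable_fun setT f -> (forall x, 0 <= f x) ->
  \int[P]_w f (X w) = \int[nu]_x f x.
Proof.
case: hX => mX hX mf f0.
pose LT := measurableTypeR R.
have mX' : measurable_fun [set: T] (X : T -> LT) := mX.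
have mf' : measurable_fun [set: LT] (f : LT -> \bar R) := mf.
pose Xp : {mfun T >-> LT} := HB.pack (X : T -> LT) (@isMeasurableFun.Build _ _ T LT X mX').
have := @ge0_integral_pushforward _ _ T LT R (X : T -> LT) mX' P setT f measurableT mf' (fun y _ => f0 y).
rewrite preimage_setT => <-.
change ((\int[distribution P Xp]_x f x)%E = \int[nu]_x f x).
refine (@eq_measure_integral _ _ _ setT nu (distribution P Xp) f _) => A mA _.
exact: (hX A mA).
Qed.

Lemma transfer2 (X Y : T -> R) (mX : measurable_fun setT X) (mY : measurable_fun setT Y)
  (hXY : forall A B, measurable A -> measurable B ->
     P (X @^-1` A `&` Y @^-1` B) = nu A * nu B)
  (f g : R -> \bar R) :
  measurable_fun setT f -> (forall x, 0 <= f x) ->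
  measurable_fun setT g -> (forall x, 0 <= g x) ->
  \int[P]_w (f (X w) * g (Y w)) = \int[nu]_x f x * \int[nu]_x g x.
Proof.
move=> mf f0 mg g0.
pose LT := measurableTypeR R.
have mX' : measurable_fun [set: T] (X : T -> LT) := mX.
have mY' : measurable_fun [set: T] (Y : T -> LT) := mY.
have mf' : measurable_fun [set: LT] (f : LT -> \bar R) := mf.
have mg' : measurable_fun [set: LT] (g : LT -> \bar R) := mg.
pose phi := fun w => ((X w : LT), (Y w : LT)).
have mphi : measurable_fun setT phi by exact: measurable_fun_pair.
pose h := fun z : LT * LT => f z.1 * g z.2.
have mh : measurable_fun setT h.
  apply: emeasurable_funM.
  - exact: measurableT_comp mf' measurable_fst.
  - exact: measurableT_comp mg' measurable_snd.
have h0 z : 0 <= h z by rewrite mule_ge0.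
have := @ge0_integral_pushforward _ _ T _ R phi mphi P setT h measurableT mh (fun y _ => h0 y).
rewrite preimage_setT /= => <-.
pose phip : {mfun T >-> (LT * LT)%type} := HB.pack phi (isMeasurableFun.Build _ _ _ _ _ mphi).
change ((\int[distribution P phip]_x h x)%E = \int[nu]_x f x * \int[nu]_x g x).
rewrite (@eq_measure_integral _ _ _ setT (nu \x nu) (distribution P phip) h); last first.
  move=> A mA _; apply/esym; apply: (product_measure_unique (m' := distribution P phip)) => // A1 B1 mA1 mB1.
rewrite fubini_tonelli1 //.
rewrite /fubini_F /h /=.
under eq_integral do rewrite ge0_integralZl //.
by rewrite ge0_integralZr // integral_ge0.
Qed.
End Transfer.

Section Gauss.
Context {R : realType} {dsp : measure_display} {T : measurableType dsp} (P : probability T R).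
Notation nu := (@normal_prob R 0 1).
Local Open Scope ereal_scope.

Lemma nu_fin (A : set R) : measurable A -> (fine (nu A))%:E = nu A.
Proof. by move=> mA; rewrite fineK // fin_num_measure. Qed.

Lemma gauss_comp n (X : 'I_n -> T -> R) (hX : std_gauss_vector P X) i :
  std_normal_rv P (X i).
Proof.
case: hX => mX hX; split => // A mA.
pose B := fun k => if k == i then A else setT.
have := hX B (fun k => ltac:(rewrite /B; case: ifP => _ //)).
have -> : \bigcap_(k in [set: 'I_n]) (X k @^-1` B k) = X i @^-1` A.
  apply/seteqP; split => w /=.
    by move=> /(_ i I); rewrite /B eqxx.
  by move=> Aw k _; rewrite /B; case: ifP => // /eqP ->.
move=> ->.
rewrite (bigD1 i) //= big1 ?mulr1 /B ?eqxx ?nu_fin //.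
by move=> k /negbTE ->; rewrite probability_setT.
Qed.

Lemma gauss_pair n (X : 'I_n -> T -> R) (hX : std_gauss_vector P X) i j :
  i != j -> forall A B, measurable A -> measurable B ->
  P (X i @^-1` A `&` X j @^-1` B) = nu A * nu B.
Proof.
move=> ij A B mA mB.
case: hX => mX hX.
pose C := fun k => if k == i then A else if k == j then B else setT.
have := hX C (fun k => ltac:(rewrite /C; case: ifP => _ //; case: ifP => _ //)).
have -> : \bigcap_(k in [set: 'I_n]) (X k @^-1` C k) = X i @^-1` A `&` X j @^-1` B.
  apply/seteqP; split => w /=.
    move=> H; split.
      by move: (H i I); rewrite /C eqxx.
    by move: (H j I); rewrite /C eq_sym (negbTE ij) eqxx.
  move=> [Aw Bw] k _; rewrite /C; case: ifP => [/eqP -> //|_].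
  by case: ifP => // /eqP ->.
move=> ->.
rewrite (bigD1 i) //= (bigD1 j) /=; last by rewrite eq_sym.
rewrite big1; last first.
  by move=> k /andP[ki kj]; rewrite /C (negbTE ki) (negbTE kj) probability_setT.
rewrite mulr1 /C eqxx eq_sym (negbTE ij) eqxx.
by rewrite EFinM !nu_fin.
Qed.
End Gauss.

Lemma intZ {R : realType} {dd : measure_display} {T : measurableType dd} (mu : {measure set T -> \bar R})
  (k : R) (f : T -> R) : 0 <= k -> measurable_fun setT f -> (forall w, 0 <= f w) ->
  (\int[mu]_w (k * f w)%:E = k%:E * \int[mu]_w (f w)%:E)%E.
Proof.
move=> k0 mf f0.
under eq_integral do rewrite EFinM.
apply: ge0_integralZl => //.
all: try exact/measurable_EFinP.
all: try (by move=> w _; rewrite lee_fin).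
all: by rewrite lee_fin.
Qed.

Section Moments.
Context {R : realType} {dsp : measure_display} {T : measurableType dsp} (P : probability T R).
Notation nu := (@normal_prob R 0 1).
Variable d : nat.
Variable X : 'I_d -> T -> R.
Hypothesis hX : std_gauss_vector P X.

Definition m4 : R := fine (\int[nu]_x (x ^+ 4)%:E)%E.

Lemma m4E : (\int[nu]_x (x ^+ 4)%:E)%E = m4%:E.
Proof.
rewrite /m4 fineK // ge0_fin_numE ?M4fin //.
by apply: integral_ge0 => x _; rewrite lee_fin exprn_even_ge0.
Qed.

Lemma mX i : measurable_fun setT (X i).
Proof. by case: hX. Qed.

Lemma EX2 i : (\int[P]_w (X i w ^+ 2)%:E = 1)%E.
Proof.
have := transfer P (X i) (gauss_comp P d X hX i) (fun x => (x ^+ 2)%:E).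
rewrite M2 => <- //.
- by apply/measurable_EFinP; exact: measurable_funX.
- by move=> x; rewrite lee_fin sqr_ge0.
Qed.

Lemma EXX i j : (\int[P]_w (X i w ^+ 2 * X j w ^+ 2)%:E = (if j == i then m4 else 1)%:E)%E.
Proof.
case: eqP => [->|/eqP ji].
  have := transfer P (X i) (gauss_comp P d X hX i) (fun x => (x ^+ 4)%:E).
  rewrite m4E => <- //.
  - by apply: eq_integral => w _; rewrite -exprD.
  - by apply/measurable_EFinP; exact: measurable_funX.
  - by move=> x; rewrite lee_fin exprn_even_ge0.
have m2 : measurable_fun setT (fun x : R => (x ^+ 2)%:E).
  by apply/measurable_EFinP; exact: measurable_funX.
have := transfer2 P (X i) (X j) (mX i) (mX j) (gauss_pair P d X hX i j (ltac:(by rewrite eq_sym))) _ _ m2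
  (fun x => ltac:(by rewrite lee_fin sqr_ge0)) m2 (fun x => ltac:(by rewrite lee_fin sqr_ge0)).
by rewrite M2 mule1 => <-; apply: eq_integral => w _; rewrite EFinM.
Qed.

Definition Ssum w := sqnorm (fun i => X i w).

Lemma S_ge0 w : 0 <= Ssum w.
Proof. by rewrite /Ssum /sqnorm sumr_ge0 // => i _; rewrite sqr_ge0. Qed.

Lemma mS : measurable_fun setT Ssum.
Proof. by apply: measurable_sum => i; apply: measurable_funX; exact: mX. Qed.

Lemma ES : (\int[P]_w (Ssum w)%:E = (d%:R)%:E)%E.
Proof.
rewrite /Ssum /sqnorm.
under eq_integral do rewrite -sumEFin.
rewrite ge0_integral_sum //; last 2 first.
- by move=> i; apply/measurable_EFinP; apply: measurable_funX; exact: mX.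
- by move=> i w _; rewrite lee_fin sqr_ge0.
under eq_bigr do rewrite EX2.
by rewrite sumEFin sumr_const card_ord.
Qed.

Lemma ES2 : (\int[P]_w (Ssum w ^+ 2)%:E = (d%:R * (d%:R + m4 - 1))%:E)%E.
Proof.
have e w : Ssum w ^+ 2 = \sum_(i < d) \sum_(j < d) (X i w ^+ 2 * X j w ^+ 2).
  by rewrite /Ssum /sqnorm expr2 mulr_suml; apply: eq_bigr => i _; rewrite mulr_sumr.
under eq_integral do rewrite e -sumEFin.
rewrite ge0_integral_sum //; last 2 first.
- move=> i; apply/measurable_EFinP; apply: measurable_sum => j.
  by apply: measurable_funM; apply: measurable_funX; exact: mX.
- by move=> i w _; rewrite lee_fin sumr_ge0 // => j _; rewrite mulr_ge0 ?sqr_ge0.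
under eq_bigr => i _.
  under eq_integral do rewrite -sumEFin.
  rewrite ge0_integral_sum //; last 2 first.
  - by move=> j; apply/measurable_EFinP; apply: measurable_funM; apply: measurable_funX; exact: mX.
  - by move=> j w _; rewrite lee_fin mulr_ge0 ?sqr_ge0.
  under eq_bigr do rewrite EXX.
  rewrite sumEFin.
  over.
rewrite sumEFin; congr EFin.
have e2 i : \sum_(j < d) (if j == i then m4 else 1) = d%:R + m4 - 1.
  have -> : \sum_(j < d) (if j == i then m4 else 1) = \sum_(j < d) (1 + (if j == i then m4 - 1 else 0)).
    by apply: eq_bigr => j _; case: eqP => _; [ring|rewrite addr0].
  rewrite big_split /= sumr_const card_ord -big_mkcond /= big_pred1_eq.
  by rewrite addrA.
under eq_bigr do rewrite e2.
by rewrite sumr_const card_ord mulr_natl.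
Qed.

Lemma alg8 (F : fieldType) (s dd : F) : dd != 0 ->
  (s / dd - 1) ^+ 2 + 2 / dd * s = dd^-2 * s ^+ 2 + 1.
Proof. move=> d0; field. exact: d0. Qed.

Lemma EQ2 : (0 < d)%N ->
  (\int[P]_w ((Ssum w / d%:R - 1) ^+ 2)%:E = ((m4 - 1) / d%:R)%:E)%E.
Proof.
move=> d0.
have dn0 : (d%:R : R) != 0 by rewrite pnatr_eq0 -lt0n.
have dp : (0 : R) < d%:R by rewrite ltr0n.
have mQ : measurable_fun setT (fun w => ((Ssum w / d%:R - 1) ^+ 2)%:E).
  apply/measurable_EFinP; apply: measurable_funX; apply: measurable_funB => //.
  by apply: measurable_funM => //; exact: mS.
have h : (\int[P]_w ((Ssum w / d%:R - 1) ^+ 2 + 2 / d%:R * Ssum w)%:E =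
          \int[P]_w ((d%:R : R)^-2 * Ssum w ^+ 2 + 1)%:E)%E.
  by apply: eq_integral => w _; rewrite alg8.
have f10 w : setT w -> (0 <= ((Ssum w / d%:R - 1) ^+ 2)%:E)%E by move=> _; rewrite lee_fin sqr_ge0.
have f20 w : setT w -> (0 <= (2 / d%:R * Ssum w)%:E)%E.
  by move=> _; rewrite lee_fin mulr_ge0 ?S_ge0 // divr_ge0 // ler0n.
have mf2 : measurable_fun setT (fun w => (2 / d%:R * Ssum w)%:E).
  by apply/measurable_EFinP; apply: measurable_funM => //; exact: mS.
have g10 w : setT w -> (0 <= ((d%:R : R)^-2 * Ssum w ^+ 2)%:E)%E.
  by move=> _; rewrite lee_fin mulr_ge0 ?sqr_ge0 // invr_ge0 exprn_ge0 // ler0n.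
have mg1 : measurable_fun setT (fun w => ((d%:R : R)^-2 * Ssum w ^+ 2)%:E).
  apply/measurable_EFinP; apply: measurable_funM => //; apply: measurable_funX; exact: mS.
have g20 (w : T) : setT w -> (0 <= (1 : R)%:E)%E by move=> _; rewrite lee_fin ler01.
have mg2 : measurable_fun setT (fun w : T => (1 : R)%:E) by exact: measurable_cst.
move: h; under eq_integral do rewrite EFinD.
rewrite (@ge0_integralD _ _ _ P setT measurableT _ _ f10 mQ f20 mf2).
under [X in _ = X -> _]eq_integral do rewrite EFinD.
rewrite (@ge0_integralD _ _ _ P setT measurableT _ _ g10 mg1 g20 mg2).
have a1 : (\int[P]_w (2 / d%:R * Ssum w)%:E = 2%:E)%E.
  have k0 : (0:R) <= 2 / d%:R by rewrite divr_ge0 // ler0n.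
  rewrite (intZ P _ _ k0 mS S_ge0).
  by rewrite ES -EFinM divfK.
have a2 : (\int[P]_w ((d%:R : R)^-2 * Ssum w ^+ 2)%:E = ((d%:R : R)^-2 * (d%:R * (d%:R + m4 - 1)))%:E)%E.
  have k0 : (0:R) <= (d%:R)^-2 by rewrite invr_ge0 exprn_ge0 // ler0n.
  have mS2 : measurable_fun setT (fun w => Ssum w ^+ 2) by apply: measurable_funX; exact: mS.
  rewrite (intZ P _ _ k0 mS2 (fun w => sqr_ge0 (Ssum w))).
  by rewrite ES2 -EFinM.
have a3 : (\int[P]_w (1 : R)%:E = 1)%E.
  by rewrite integral_cst //= probability_setT mul1e.
rewrite a1 a2 a3.
have I0 : (0 <= \int[P]_w ((Ssum w / d%:R - 1) ^+ 2)%:E)%E.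
  by apply: integral_ge0 => w _; rewrite lee_fin sqr_ge0.
move: I0; case: (\int[P]_w _)%E => [r| |] // _.
  rewrite -!EFinD => hh; have {}hh := EFin_inj hh; congr EFin.
  have -> : r = (d%:R : R)^-2 * (d%:R * (d%:R + m4 - 1)) + 1 - 2 by rewrite -hh addrK.
  by field.
Qed.
End Moments.

Lemma alg7 (F : realFieldType) (a b ea eb : F) : b <= a -> 0 <= ea <= 1 ->
  ea + (b - a) * ea <= eb -> ea - eb <= a - b.
Proof. move=> ba /andP[e0 e1] h. nra. Qed.

Lemma amgm (F : realFieldType) (u q c t : F) : 0 < t -> 0 <= c ->
  `|u| * (c * `|q|) <= (t / 2) * u ^+ 2 + (c ^+ 2 / (2 * t)) * q ^+ 2.
Proof.
move=> t0 c0.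
have hu : u ^+ 2 = `|u| ^+ 2 by rewrite real_normK ?num_real.
have hq : q ^+ 2 = `|q| ^+ 2 by rewrite real_normK ?num_real.
rewrite hu hq.
have u0 := normr_ge0 u; have q0 := normr_ge0 q.
set U := `|u|; set Q := `|q|.
have e : t / 2 * U ^+ 2 + c ^+ 2 / (2 * t) * Q ^+ 2 - U * (c * Q) = (t * U - c * Q) ^+ 2 / (2 * t).
  by field; rewrite gt_eqF.
rewrite -subr_ge0 e; apply: divr_ge0; [exact: sqr_ge0|lra].
Qed.

Section Lip.
Variable R : realType.

Lemma lipg_le {a b : R} : b <= a ->
  0 <= Num.min 1 (expR a) - Num.min 1 (expR b) <= a - b.
Proof.
move=> ba.
have eb := expR_ge1Dx b.
case: (lerP a 0) => a0.
  have b0 : b <= 0 by apply: le_trans a0.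
  rewrite (@min_r _ _ 1 (expR a)) ?expR_le1 // (@min_r _ _ 1 (expR b)) ?expR_le1 //.
  rewrite subr_ge0 ler_expR ba /=.
  apply: alg7 => //; last exact: expR_tang.
  by rewrite expR_ge0 expR_le1.
rewrite (@min_l _ _ 1 (expR a)); last by apply: ltW; rewrite expR_gt1.
case: (lerP b 0) => b0.
  rewrite (@min_r _ _ 1 (expR b)) ?expR_le1 //.
  rewrite subr_ge0 expR_le1 b0 /=; lra.
rewrite (@min_l _ _ 1 (expR b)); last by apply: ltW; rewrite expR_gt1.
rewrite subrr lexx /=; lra.
Qed.

Lemma lipg (a b : R) :
  `|Num.min 1 (expR a) - Num.min 1 (expR b)| <= `|a - b|.
Proof.
case: (lerP b a) => ba.
  have /andP[h1 h2] := lipg_le (a:=a) (b:=b) ba.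
  by rewrite !ger0_norm // subr_ge0.
have /andP[h1 h2] := lipg_le (a:=b) (b:=a) (ltW ba).
by rewrite distrC ger0_norm.
Qed.
End Lip.

Lemma alg9 (F : realFieldType) (z : F) : `|z| <= 1 + z ^+ 2.
Proof.
have h : z ^+ 2 = `|z| ^+ 2 by rewrite real_normK ?num_real.
rewrite h; have := normr_ge0 z; set u := `|z|; nra.
Qed.

Lemma alg10 (F : realFieldType) (l al z s dd : F) : dd != 0 ->
  (- (l * al * z) - l ^+ 2 * s / (2 * dd)) - (- (l * al * z) - l ^+ 2 / 2)
  = - (l ^+ 2 / 2 * (s / dd - 1)).
Proof. by move=> d0; field. Qed.

Section Key.
Context {R : realType} {dsp : measure_display} {T : measurableType dsp} (P : probability T R).
Notation nu := (@normal_prob R 0 1).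
Variable d : nat.
Hypothesis d0 : (0 < d)%N.
Variables (Z1 Z2 : T -> R) (X : 'I_d -> T -> R).
Hypotheses (hZ1 : std_normal_rv P Z1) (hZ2 : std_normal_rv P Z2) (hX : std_gauss_vector P X).

Lemma EZ2 : (\int[P]_w (Z2 w ^+ 2)%:E = 1)%E.
Proof.
have := transfer P Z2 hZ2 (fun x => (x ^+ 2)%:E).
rewrite M2 => <- //.
- by apply/measurable_EFinP; exact: measurable_funX.
- by move=> x; rewrite lee_fin sqr_ge0.
Qed.

Lemma integrable_Zg (f : T -> R) : measurable_fun setT f ->
  P.-integrable setT (fun w => (Z2 w * Num.min 1 (expR (f w)))%:E).
Proof.
move=> mf.
have mZ2 : measurable_fun setT Z2 by case: hZ2.
apply/integrableP; split.
  apply/measurable_EFinP; apply: measurable_funM => //.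
  apply: (measurable_minr (f := cst 1) (g := fun w => expR (f w))) => //.
  exact: measurableT_comp mf.
have mg : measurable_fun setT (fun w => Z2 w * Num.min 1 (expR (f w))).
  apply: measurable_funM => //.
  apply: (measurable_minr (f := cst 1) (g := fun w => expR (f w))) => //.
  exact: measurableT_comp mf.
have h1 : forall w, setT w -> (0 <= `|(Z2 w * Num.min 1 (expR (f w)))%:E|)%E by move=> w _.
have h2 : measurable_fun setT (fun w => `|(Z2 w * Num.min 1 (expR (f w)))%:E|%E).
  by apply: measurableT_comp => //; apply/measurable_EFinP.
have h3 : measurable_fun setT (fun w => (1 + Z2 w ^+ 2)%:E).
  by apply/measurable_EFinP; apply: measurable_funD => //; exact: measurable_funX.
apply: (@le_lt_trans _ _ (\int[P]_w (1 + Z2 w ^+ 2)%:E)%E).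
  apply: (@ge0_le_integral _ _ _ P setT measurableT _ _ h1 h2 h3).
  move=> w _; rewrite abse_EFin lee_fin normrM.
  apply: (le_trans _ (alg9 _ (Z2 w))).
  rewrite ler_piMr //.
  rewrite ger0_norm; first by rewrite ge_min lexx.
  by rewrite le_min ler01 expR_ge0.
under eq_integral do rewrite EFinD.
have k1 (w : T) : setT w -> (0 <= (1:R)%:E)%E by move=> _; rewrite lee_fin ler01.
have k2 : measurable_fun setT (fun w : T => (1:R)%:E) by exact: measurable_cst.
have k3 (w : T) : setT w -> (0 <= (Z2 w ^+ 2)%:E)%E by move=> _; rewrite lee_fin sqr_ge0.
have k4 : measurable_fun setT (fun w => (Z2 w ^+ 2)%:E).
  by apply/measurable_EFinP; exact: measurable_funX.
rewrite (@ge0_integralD _ _ _ P setT measurableT _ _ k1 k2 k3 k4).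
by rewrite EZ2 integral_cst //= probability_setT mul1e -EFinD ltry.
Qed.

Lemma key (l alpha t : R) : 0 < t ->
  (`| 'E_P[fun w => (Z2 w *
            Num.min 1 (expR (- (l * alpha * Z1 w)
                             - l ^+ 2 * sqnorm (fun i => X i w)
                               / (2 * d%:R))))%R]
        - 'E_P[fun w => (Z2 w *
            Num.min 1 (expR (- (l * alpha * Z1 w) - l ^+ 2 / 2)))%R] |
   <= (t / 2 + (l ^+ 2 / 2) ^+ 2 / (2 * t) * ((m4 - 1) / d%:R))%:E)%E.
Proof.
move=> t0.
have dn0 : (d%:R : R) != 0 by rewrite pnatr_eq0 -lt0n.
have mZ1 : measurable_fun setT Z1 by case: hZ1.
have mZ2 : measurable_fun setT Z2 by case: hZ2.
have mS := mS P d X hX.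
pose a := fun w => - (l * alpha * Z1 w) - l ^+ 2 * sqnorm (fun i => X i w) / (2 * d%:R).
pose b := fun w => - (l * alpha * Z1 w) - l ^+ 2 / 2.
have ma : measurable_fun setT a.
  apply: measurable_funB.
    by apply: measurableT_comp => //; apply: measurable_funM => //.
  by apply: measurable_funM => //; apply: measurable_funM => //.
have mb : measurable_fun setT b.
  apply: measurable_funB => //.
  by apply: measurableT_comp => //; apply: measurable_funM => //.
have iA := integrable_Zg a ma.
have iB := integrable_Zg b mb.
rewrite unlock.
rewrite -(integralB measurableT iA iB).
apply: (le_trans (le_abse_integral _ _ _)).
  by [].
  apply: emeasurable_funB; [exact: (measurable_int _ iA)|exact: (measurable_int _ iB)].
pose k := (l ^+ 2 / 2) ^+ 2 / (2 * t).
pose Q := fun w => sqnorm (fun i => X i w) / d%:R - 1.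
have mQ2 : measurable_fun setT (fun w => Q w ^+ 2).
  apply: measurable_funX; apply: measurable_funB => //.
  by apply: measurable_funM => //.
have mZ22 : measurable_fun setT (fun w => Z2 w ^+ 2) by exact: measurable_funX.
have h1 : forall w, setT w -> (0 <= `|(Z2 w * Num.min 1 (expR (a w)))%:E - (Z2 w * Num.min 1 (expR (b w)))%:E|)%E.
  by move=> w _.
have h2 : measurable_fun setT (fun w => `|(Z2 w * Num.min 1 (expR (a w)))%:E - (Z2 w * Num.min 1 (expR (b w)))%:E|%E).
  apply: measurableT_comp => //; apply: emeasurable_funB; [exact: (measurable_int _ iA)|exact: (measurable_int _ iB)].
have h3 : measurable_fun setT (fun w => (t / 2 * Z2 w ^+ 2 + k * Q w ^+ 2)%:E).
  apply/measurable_EFinP; apply: measurable_funD; apply: measurable_funM => //.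
apply: (le_trans (@ge0_le_integral _ _ _ P setT measurableT _ _ h1 h2 h3 _)).
  move=> w _; rewrite -EFinB abse_EFin lee_fin -mulrBr normrM.
  have c0 : (0:R) <= l ^+ 2 / 2 by rewrite divr_ge0 // sqr_ge0.
  apply: (le_trans _ (amgm _ (Z2 w) (Q w) (l ^+ 2 / 2) t t0 c0)).
  apply: ler_wpM2l => //.
  apply: (le_trans (lipg _ _ _)).
  rewrite /a /b alg10 // normrN normrM ger0_norm //.
under eq_integral do rewrite EFinD.
have k1 w : setT w -> (0 <= (t / 2 * Z2 w ^+ 2)%:E)%E.
  by move=> _; rewrite lee_fin mulr_ge0 ?sqr_ge0 // divr_ge0 // ltW.
have k2 : measurable_fun setT (fun w => (t / 2 * Z2 w ^+ 2)%:E).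
  by apply/measurable_EFinP; apply: measurable_funM.
have k3 w : setT w -> (0 <= (k * Q w ^+ 2)%:E)%E.
  by move=> _; rewrite lee_fin mulr_ge0 ?sqr_ge0 // divr_ge0 ?sqr_ge0 // mulr_ge0 // ltW.
have k4 : measurable_fun setT (fun w => (k * Q w ^+ 2)%:E).
  by apply/measurable_EFinP; apply: measurable_funM.
rewrite (@ge0_integralD _ _ _ P setT measurableT _ _ k1 k2 k3 k4).
have t20 : (0:R) <= t / 2 by rewrite divr_ge0 // ltW.
have kk0 : (0:R) <= k by rewrite divr_ge0 ?sqr_ge0 // mulr_ge0 // ltW.
rewrite (intZ P _ _ t20 mZ22 (fun w => sqr_ge0 (Z2 w))).
rewrite (intZ P _ _ kk0 mQ2 (fun w => sqr_ge0 (Q w))).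
rewrite EZ2 mule1 /Q.
have -> : (\int[P]_w ((sqnorm (fun i => X i w) / d%:R - 1) ^+ 2)%:E)%E = ((m4 - 1) / d%:R)%:E.
  exact: (EQ2 P d X hX d0).
by rewrite -EFinM -EFinD.
Qed.
End Key.

Lemma alg11 (F : realFieldType) (eps cc m dd : F) : 0 < eps -> 0 <= cc -> 0 < dd ->
  4 * cc * `|m| / eps ^+ 2 < dd -> eps / 2 / 2 + cc / (2 * (eps / 2)) * (m / dd) < eps.
Proof.
move=> e0 c0 d0 h.
have e2 : 0 < eps ^+ 2 by rewrite exprn_gt0.
rewrite ltr_pdivrMr // in h.
have hm : m <= `|m| by rewrite ler_norm.
have a0 : 0 <= `|m| := normr_ge0 m.
have -> : cc / (2 * (eps / 2)) * (m / dd) = (cc * m) / (eps * dd) by field; rewrite !gt_eqF.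
have : (cc * m) / (eps * dd) < eps / 4.
  rewrite ltr_pdivrMr ?mulr_gt0 //.
  have : cc * m <= cc * `|m| by rewrite ler_wpM2l.
  nra.
lra.
Qed.

Theorem lemma5 (R : realType) (l : R) (hl : 0 < l)
  (dsp : nat -> measure_display) (T : forall n, measurableType (dsp n))
  (P : forall n, probability (T n) R)
  (Z1 Z2 : forall n, T n -> R) (Zx : forall n, 'I_n.+1 -> T n -> R)
  (hZ1 : forall n, std_normal_rv (P n) (Z1 n))
  (hZ2 : forall n, std_normal_rv (P n) (Z2 n))
  (hZx : forall n, std_gauss_vector (P n) (Zx n)) :
  forall eps : R, 0 < eps -> exists N : nat, forall n : nat, (N <= n)%N ->
    forall alpha : R, 0 <= alpha ->
    (`| 'E_(P n)[fun w => (Z2 n w *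
            Num.min 1 (expR (- (l * alpha * Z1 n w)
                             - l ^+ 2 * sqnorm (fun i => Zx n i w)
                               / (2 * n.+1%:R))))%R]
        - 'E_(P n)[fun w => (Z2 n w *
            Num.min 1 (expR (- (l * alpha * Z1 n w) - l ^+ 2 / 2)))%R] |
     < eps%:E)%E.
Proof.
move=> eps e0.
pose c2 := (l ^+ 2 / 2) ^+ 2.
pose B := 4 * c2 * `|@m4 R - 1| / eps ^+ 2.
have c20 : 0 <= c2 by rewrite sqr_ge0.
have B0 : 0 <= B by rewrite divr_ge0 ?sqr_ge0 // mulr_ge0 // mulr_ge0.
exists (Num.bound B) => n Nn alpha a0.
have t0 : 0 < eps / 2 by rewrite divr_gt0.
apply: (le_lt_trans (key (P n) n.+1 (ltn0Sn n) (Z1 n) (Z2 n) (Zx n) (hZ1 n) (hZ2 n) (hZx n) l alpha (eps / 2) t0)).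
rewrite lte_fin; apply: alg11 => //.
all: try by rewrite ltr0n.
apply: (lt_le_trans (archi_boundP B0)).
by rewrite ler_nat; apply: leq_trans Nn _.
Qed.
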